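(* Let $G$ be a non-amenable group and let $H$ be a subgroup of finite index in $G$. Then $$\mathcal{T}(H)-2\leq [G:H]\,(\mathcal{T}(G)-2).$$
   Context: A group $G$ admits a paradoxical decomposition if there exist positive integers $m,n$, pairwise disjoint subsets $P_1,\ldots,P_m,Q_1,\ldots,Q_n$ of $G$ and elements $g_1,\ldots,g_m,h_1,\ldots,h_n\in G$ such that $G=\bigcup_{i=1}^m P_ig_i=\bigcup_{j=1}^n Q_jh_j$. A group admits a paradoxical decomposition if and only if it is non-amenable. For a non-amenable group $G$, the Tarski number $\mathcal{T}(G)$ is the minimal possible value of $m+n$ over all paradoxical decompositions of $G$ (a finite index subgroup of a non-amenable group is non-amenable). *)

(* Defs.v *)
From Stdlib Require Import Arith ZArith Lia.

Record Grp := {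
  gcar :> Type;
  gmul : gcar -> gcar -> gcar;
  gone : gcar;
  ginv : gcar -> gcar;
  gmulA : forall x y z, gmul x (gmul y z) = gmul (gmul x y) z;
  gmul1l : forall x, gmul gone x = x;
  gmulVl : forall x, gmul (ginv x) x = gone
}.

Definition is_subgroup (G : Grp) (H : G -> Prop) : Prop :=
  H (gone G) /\
  (forall x y, H x -> H y -> H (gmul G x y)) /\
  (forall x, H x -> H (ginv G x)).

Definition full (G : Grp) : G -> Prop := fun _ => True.

(* [G:H] = d : there are d right cosets H r_0, ..., H r_(d-1) and every
   element of G lies in exactly one of them. *)
Definition has_index (G : Grp) (H : G -> Prop) (d : nat) : Prop :=
  exists r : nat -> G,
    forall x : G, exists j, j < d /\ H (gmul G x (ginv G (r j))) /\
      forall j', j' < d -> H (gmul G x (ginv G (r j'))) -> j' = j.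

(* A paradoxical decomposition of the group S (a subgroup of G, viewed as a
   group in its own right) with m pieces P_i and n pieces Q_j:
   pairwise disjoint subsets of S, elements g_i, h_j of S, and
   S = U_i P_i g_i = U_j Q_j h_j. *)
Definition paradoxical (G : Grp) (S : G -> Prop) (m n : nat) : Prop :=
  0 < m /\ 0 < n /\
  exists (P Q : nat -> G -> Prop) (g h : nat -> G),
    (forall i x, i < m -> P i x -> S x) /\
    (forall j x, j < n -> Q j x -> S x) /\
    (forall i, i < m -> S (g i)) /\
    (forall j, j < n -> S (h j)) /\
    (forall i i' x, i < m -> i' < m -> i <> i' -> P i x -> P i' x -> False) /\
    (forall j j' x, j < n -> j' < n -> j <> j' -> Q j x -> Q j' x -> False) /\
    (forall i j x, i < m -> j < n -> P i x -> Q j x -> False) /\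
    (forall x, S x <-> exists i y, i < m /\ P i y /\ x = gmul G y (g i)) /\
    (forall x, S x <-> exists j y, j < n /\ Q j y /\ x = gmul G y (h j)).

(* Non-amenability, via Tarski's characterization recalled in the paper:
   G admits a paradoxical decomposition. *)
Definition nonamenable (G : Grp) : Prop :=
  exists m n, paradoxical G (full G) m n.

Definition is_tarski_number (G : Grp) (S : G -> Prop) (k : nat) : Prop :=
  (exists m n, paradoxical G S m n /\ m + n = k) /\
  (forall m n, paradoxical G S m n -> k <= m + n).

(* Main.v *)
Require Import Defs.
From Stdlib Require Import Arith ZArith.
From Stdlib Require Import Lia.
From mathcomp Require Import all_boot.
From mathcomp Require Import finmap.
From mathcomp Require Import boolp classical_sets.
From mathcomp Require Import zify.
Set Implicit Arguments. Unset Strict Implicit. Unset Printing Implicit Defensive.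

Module HallM.
Local Open Scope fset_scope.

Section Hall.
Variables (L R : choiceType) (N : L -> {fset R}).

Definition NB (E : L -> {fset R}) (X : {fset L}) : {fset R} :=
  \bigcup_(u <- X) E u.

Definition hall (E : L -> {fset R}) := forall X : {fset L}, (#|` X| <= #|` NB E X|)%N.

Lemma NBP E X r : reflect (exists2 u, u \in X & r \in E u) (r \in NB E X).
Proof.
apply: (iffP (bigfcupP _ _ _ _)) => [[u /andP[uX _] rE]|[u uX rE]]; exists u => //.
by rewrite uX.
Qed.

Lemma sum_sub (B C : L -> {fset R}) (X : seq L) :
  (forall u, u \in X -> B u `<=` C u) ->
  (\sum_(u <- X) #|` B u| <= \sum_(u <- X) #|` C u|)%N.
Proof.
elim: X => [|x X IH] H; first by rewrite !big_nil.
rewrite !big_cons leq_add //.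
  by apply: fsubset_leq_card; apply: H; rewrite inE eqxx.
by apply: IH => u uX; apply: H; rewrite inE uX orbT.
Qed.

Lemma sum_eq (B C : L -> {fset R}) (X : seq L) :
  (forall u, u \in X -> B u `<=` C u) ->
  (\sum_(u <- X) #|` C u| <= \sum_(u <- X) #|` B u|)%N ->
  forall u, u \in X -> C u `<=` B u.
Proof.
elim: X => [|x X IH] H Hs u; first by rewrite in_nil.
rewrite !big_cons in Hs.
have H1 : B x `<=` C x by apply: H; rewrite inE eqxx.
have H2 : forall u, u \in X -> B u `<=` C u by move=> v vX; apply: H; rewrite inE vX orbT.
have c1 := fsubset_leq_card H1.
have c2 := sum_sub H2.
have e1 : #|` C x| = #|` B x| by apply/eqP; rewrite eqn_leq c1 andbT; lia.
have e2 : (\sum_(u <- X) #|` C u| <= \sum_(u <- X) #|` B u|)%N by lia.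
rewrite inE => /orP[/eqP ->|uX]; last exact: IH.
apply/fsubsetP => r rC.
have eqBC : B x =i C x by move: H1; move/(fsubset_cardP (esym e1)).
by rewrite eqBC.
Qed.


Lemma NB_sub E E' X X' : X `<=` X' -> (forall u, u \in X -> E u `<=` E' u) ->
  NB E X `<=` NB E' X'.
Proof.
move=> sX sE; apply/fsubsetP => r /NBP[u uX rE]; apply/NBP; exists u.
  by apply: (fsubsetP sX).
by apply: (fsubsetP (sE _ uX)).
Qed.

Lemma NB1 E u : NB E [fset u] `<=` E u.
Proof. by apply/fsubsetP => r /NBP[v /fset1P -> ]. Qed.

Lemma hall_one E u : hall E -> (0 < #|` E u|)%N.
Proof.
move=> hE; have := hE [fset u]; rewrite cardfs1 => h.
by apply: leq_trans h (fsubset_leq_card (NB1 E u)).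
Qed.

Lemma break_hall E u r :
  hall E -> ~ hall (fun v => if v == u then E u `\ r else E v) ->
  exists X, u \notin X /\ (#|` NB E X `|` (E u `\ r)| <= #|` X|)%N.
Proof.
move=> hE; rewrite /hall => /existsNP[X hX].
have {}hX : (#|` NB (fun v => if v == u then E u `\ r else E v) X| < #|` X|)%N.
  by rewrite ltnNge; apply/negP.
have uX : u \in X.
  apply/negPn/negP => uX; move: hX; rewrite ltnNge => /negP; apply.
  apply: leq_trans (hE X) _; apply: fsubset_leq_card; apply: NB_sub => // v vX.
  by case: eqP => [ev|//]; move: uX; rewrite -ev vX.
exists (X `\ u); split; first by rewrite in_fsetD1 eqxx.
have cX := cardfsD1 u X; rewrite uX in cX.
suff : (#|` NB E (X `\ u) `|` (E u `\ r)| <= 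
         #|` NB (fun v => if v == u then E u `\ r else E v) X|)%N by lia.
apply: fsubset_leq_card; apply/fsubsetP => s /fsetUP[/NBP[v vX sE]|sEu].
  apply/NBP; exists v; first by move: vX; rewrite in_fsetD1 => /andP[].
  by move: vX; rewrite in_fsetD1 => /andP[/negPf -> _].
by apply/NBP; exists u; rewrite // eqxx.
Qed.

Lemma premax_single E :
  hall E ->
  (forall E', (forall v, E' v `<=` E v) -> hall E' -> forall v, E v `<=` E' v) ->
  forall u, #|` E u| = 1.
Proof.
move=> hE maxE u.
have h1 := hall_one u hE.
apply/eqP; rewrite eqn_leq h1 andbT leqNgt; apply/negP => h2.
have [r1 r1E] : exists r1, r1 \in E u.
  by move: h1; rewrite cardfs_gt0 => /fset0Pn.
have cE := cardfsD1 r1 (E u); rewrite r1E in cE.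
have [r2 r2E] : exists r2, r2 \in E u `\ r1.
  by apply/fset0Pn; rewrite -cardfs_gt0; lia.
move: r2E; rewrite in_fsetD1 => /andP[r21 r2E].
have nh : forall r, r \in E u -> ~ hall (fun v => if v == u then E u `\ r else E v).
  move=> r rE hr.
  have sub : forall v, (if v == u then E u `\ r else E v) `<=` E v.
    by move=> v; case: eqP => [->|//]; apply: fsubsetDl.
  have := maxE _ sub hr u; rewrite eqxx => /fsubsetP /(_ r rE).
  by rewrite in_fsetD1 eqxx.
have [X1 [uX1 c1]] := break_hall hE (nh _ r1E).
have [X2 [uX2 c2]] := break_hall hE (nh _ r2E).
set Y1 := NB E X1 `|` (E u `\ r1) in c1.
set Y2 := NB E X2 `|` (E u `\ r2) in c2.
have cY := cardfsUI Y1 Y2.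
have cX := cardfsUI X1 X2.
have hU := hE (u |` (X1 `|` X2)).
have hI := hE (X1 `&` X2).
rewrite cardfsU1 in_fsetU (negPf uX1) (negPf uX2) /= in hU.
have sU : NB E (u |` (X1 `|` X2)) `<=` Y1 `|` Y2.
  apply/fsubsetP => s /NBP[v]; rewrite in_fset1U in_fsetU => /orP[/eqP ->|/orP[vX|vX]] sE.
  - case: (eqVneq s r1) => [esr|nsr].
      rewrite esr in sE *.
      by rewrite in_fsetU; apply/orP; right; rewrite in_fsetU in_fsetD1 sE andbT eq_sym r21 orbT.
    by rewrite in_fsetU; apply/orP; left; rewrite in_fsetU in_fsetD1 sE andbT nsr orbT.
  - by rewrite !in_fsetU; apply/orP; left; apply/orP; left; apply/NBP; exists v.
  - by rewrite !in_fsetU; apply/orP; right; apply/orP; left; apply/NBP; exists v.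
have sI : NB E (X1 `&` X2) `<=` Y1 `&` Y2.
  apply/fsubsetP => s /NBP[v]; rewrite in_fsetI => /andP[vX1 vX2] sE.
  by rewrite in_fsetI !in_fsetU; apply/andP; split; apply/orP; left; apply/NBP; exists v.
have := fsubset_leq_card sU; have := fsubset_leq_card sI.
lia.
Qed.


Definition goodE (E : L -> {fset R}) := (forall u, E u `<=` N u) /\ hall E.
Definition TT := {E : L -> {fset R} | goodE E}.
Definition Rel (s t : TT) : bool := `[< forall u, sval t u `<=` sval s u >].

Lemma chain_bound (A : set TT) : hall N -> total_on A (fun x y => Rel x y) ->
  exists t, forall s, A s -> Rel s t.
Proof.
move=> hN tot.
pose Einf u := [fset r in N u | `[< forall s : TT, A s -> r \in sval s u >]].
have EinfP : forall u r, r \in Einf u = (r \in N u) && `[< forall s : TT, A s -> r \in sval s u >].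
  by move=> u r; rewrite !inE.
have gE : goodE Einf.
  split.
    by move=> u; apply/fsubsetP => r; rewrite EinfP => /andP[].
  move=> X.
  case: (pselect (exists s, A s)) => [[s As]|nA].
    pose sm (s : TT) := (\sum_(u <- X) #|` sval s u|)%N.
    have exP : exists n, `[< exists s, A s /\ sm s = n >] by exists (sm s); apply/asboolP; exists s.
    case: (ex_minnP exP) => n0 /asboolP[s0 [As0 e0]] hmin.
    have sub0 : forall u, u \in X -> sval s0 u `<=` Einf u.
      move=> u uX; apply/fsubsetP => r rs0; rewrite EinfP.
      apply/andP; split; first by apply: (fsubsetP ((proj1 (svalP s0)) u)).
      apply/asboolP => s1 As1.
      case: (tot _ _ As0 As1) => /asboolP R01; last by apply: (fsubsetP (R01 u)).
      have le1 : (sm s1 <= sm s0)%N by apply: sum_sub => v _; apply: R01.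
      have le2 : (n0 <= sm s1)%N by apply: hmin; apply/asboolP; exists s1.
      have := @sum_eq (sval s1) (sval s0) X (fun v _ => R01 v) ltac:(rewrite -/(sm s0) -/(sm s1); lia) u uX.
      by move/fsubsetP; apply.
    apply: leq_trans ((proj2 (svalP s0)) X) _; apply: fsubset_leq_card.
    by apply: NB_sub.
  apply: leq_trans (hN X) _; apply: fsubset_leq_card; apply: NB_sub => // u _.
  apply/fsubsetP => r rN; rewrite EinfP rN /=; apply/asboolP => s As.
  by exfalso; apply: nA; exists s.
exists (exist _ Einf gE) => s As; apply/asboolP => u /=.
by apply/fsubsetP => r; rewrite EinfP => /andP[_ /asboolP]; apply.
Qed.

Theorem hall_inf : hall N -> exists f : L -> R, injective f /\ forall u, f u \in N u.
Proof.
move=> hN.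
have gN : goodE N by split.
have [t premax] := @ZL_preorder TT (exist _ N gN) Rel
  (fun t => asboolT (fun u => fsubset_refl _))
  ltac:(move=> r s t /asboolP rs /asboolP st; apply/asboolP => u; exact: fsubset_trans (st u) (rs u))
  (fun A => chain_bound (A:=A) hN).
case: t premax => E [EN hE] premax.
have one : forall u, #|` E u| = 1.
  apply: premax_single => // E' sE' hE'.
  have gE' : goodE E' by split => // v; apply: fsubset_trans (sE' v) (EN v).
  by have := premax (exist _ E' gE') (asboolT sE'); move/asboolP.
have [f Hf] := choice (fun u => elimT (cardfs1P (E u)) (introT eqP (one u))).
exists f; split; last first.
  by move=> u; apply: (fsubsetP (EN u)); rewrite Hf inE.
move=> u v efuv; apply/eqP/negPn/negP => nuv.
have := hE [fset u; v]; rewrite cardfs2 nuv /=.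
have : NB E [fset u; v] `<=` [fset f u].
  apply/fsubsetP => r /NBP[w]; rewrite !inE => /orP[]/eqP ->; rewrite Hf inE //.
  by rewrite efuv.
by move/fsubset_leq_card; rewrite cardfs1; lia.
Qed.

End Hall.

End HallM.
Import HallM.

Module CM.
Local Open Scope fset_scope.

Lemma hall_fold (L R : choiceType) (N : L -> {fset R}) (d : nat) (Phi : L -> nat -> R * nat) :
  (0 < d)%N ->
  (forall u l, (l < d)%N -> (Phi u l).1 \in N u /\ ((Phi u l).2 < d)%N) ->
  (forall u u' l l', (l < d)%N -> (l' < d)%N -> Phi u l = Phi u' l' -> u = u' /\ l = l') ->
  hall N.
Proof.
move=> d0 HP Hinj X.
pose s1 := [seq (u, l) | u <- enum_fset X, l <- iota 0 d].
pose s2 := map (fun p => Phi p.1 p.2) s1.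
pose s3 := [seq (r, l) | r <- enum_fset (NB N X), l <- iota 0 d].
have u1 : uniq s1 by rewrite allpairs_uniq ?fset_uniq ?iota_uniq // => -[??] [??] _ _.
have u2 : uniq s2.
  rewrite map_inj_in_uniq // => -[u l] [u' l'].
  move=> /allpairsP[[v k] [vX kd /= e1]] /allpairsP[[v' k'] [vX' kd' /= e2]].
  case: e1 => -> ->; case: e2 => -> -> /= e.
  simpl in kd, kd'; rewrite mem_iota in kd; rewrite mem_iota in kd'.
  rewrite add0n in kd kd'.
  by have [-> ->] := Hinj _ _ _ _ kd kd' e.
have sub : {subset s2 <= s3}.
  move=> p /mapP[[u l] /allpairsP[[v k] [vX kd /= e]] ->] /=.
  case: e => -> -> {u l}.
  simpl in kd; rewrite mem_iota add0n in kd.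
  have [h1 h2] := HP v k kd.
  case E: (Phi v k) h1 h2 => [r l'] /= h1 h2.
  apply/allpairsP; exists (r, l') => /=; split => //.
    by apply/NBP; exists v.
  by rewrite mem_iota add0n h2.
have := uniq_leq_size u2 sub.
rewrite size_map !size_allpairs size_iota.
by rewrite leq_pmul2r.
Qed.

End CM.
Import CM.


Section Grp.
Variable G : Grp.
Local Notation "x ** y" := (gmul G x y) (at level 40, left associativity).
Local Notation inv := (ginv G).
Local Notation one := (gone G).

Lemma mulV x : x ** inv x = one.
Proof.
rewrite -(gmul1l G (x ** inv x)) -{1}(gmulVl G (inv x)).
by rewrite -gmulA (gmulA G (inv x)) gmulVl gmul1l gmulVl.
Qed.

Lemma mul1r x : x ** one = x.
Proof. by rewrite -(gmulVl G x) gmulA mulV gmul1l. Qed.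

Lemma mulKr x y : x ** y ** inv y = x.
Proof. by rewrite -gmulA mulV mul1r. Qed.

Lemma mulVKr x y : x ** inv y ** y = x.
Proof. by rewrite -gmulA gmulVl mul1r. Qed.

Lemma mulKl x y : inv x ** (x ** y) = y.
Proof. by rewrite gmulA gmulVl gmul1l. Qed.

Lemma mulrI x y z : x ** z = y ** z -> x = y.
Proof. by move=> e; rewrite -(mulKr x z) e mulKr. Qed.

Lemma mullI x y z : z ** x = z ** y -> x = y.
Proof. by move=> e; rewrite -(mulKl z x) e mulKl. Qed.

Lemma invM x y : inv (x ** y) = inv y ** inv x.
Proof.
apply: (@mullI _ _ (x ** y)); rewrite mulV -gmulA (gmulA G y) mulV gmul1l mulV //.
Qed.

Lemma invK x : inv (inv x) = x.
Proof. by apply: (@mullI _ _ (inv x)); rewrite mulV gmulVl. Qed.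


Definition matching (S : G -> Prop) (m n : nat) (a b : nat -> G) : Prop :=
  (forall i, lt i m -> S (a i)) /\ (forall j, lt j n -> S (b j)) /\
  exists (src : bool -> G -> G) (idx : bool -> G -> nat),
   (forall c y, S y -> S (src c y) /\ lt (idx c y) (if c then m else n) /\
                 y = src c y ** (if c then a else b) (idx c y)) /\
   (forall c c' y y', S y -> S y' -> src c y = src c' y' -> c = c' /\ y = y').

Lemma match_to_par S m n a b : lt 0 m -> lt 0 n -> matching S m n a b -> paradoxical G S m n.
Proof.
move=> m0 n0 [Sa [Sb [src [idx [H1 H2]]]]].
split; first exact m0. split; first exact n0.
exists (fun i x => exists y, S y /\ idx true y = i /\ src true y = x).
exists (fun j x => exists y, S y /\ idx false y = j /\ src false y = x).
exists a, b.
split. by move=> i x _ [y [Sy [_ <-]]]; case: (H1 true y Sy).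
split. by move=> i x _ [y [Sy [_ <-]]]; case: (H1 false y Sy).
split. exact Sa.
split. exact Sb.
split.
  move=> i i' x _ _ ne [y [Sy [ei ex]]] [y' [Sy' [ei' ex']]].
  have [_ ey] := H2 true true y y' Sy Sy' (etrans ex (esym ex')).
  by apply: ne; rewrite -ei -ei' ey.
split.
  move=> i i' x _ _ ne [y [Sy [ei ex]]] [y' [Sy' [ei' ex']]].
  have [_ ey] := H2 false false y y' Sy Sy' (etrans ex (esym ex')).
  by apply: ne; rewrite -ei -ei' ey.
split.
  move=> i i' x _ _ [y [Sy [ei ex]]] [y' [Sy' [ei' ex']]].
  by have [] := H2 true false y y' Sy Sy' (etrans ex (esym ex')).
split.
  move=> x; split.
    move=> Sx; have [Ss [lt1 e]] := H1 true x Sx.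
    by exists (idx true x), (src true x); split => //; split => //; exists x.
  by move=> [i [y [_ [[z [Sz [ei ez]]] ->]]]]; rewrite -ez -ei -(proj2 (proj2 (H1 true z Sz))).
move=> x; split.
  move=> Sx; have [Ss [lt1 e]] := H1 false x Sx.
  by exists (idx false x), (src false x); split => //; split => //; exists x.
by move=> [i [y [_ [[z [Sz [ei ez]]] ->]]]]; rewrite -ez -ei -(proj2 (proj2 (H1 false z Sz))).
Qed.

Lemma par_to_match S m n : paradoxical G S m n -> exists a b, matching S m n a b.
Proof.
move=> [m0 [n0 [P [Q [g [h [PS [QS [gS [hS [dP [dQ [dPQ [cP cQ]]]]]]]]]]]]]].
exists g, h; split; first exact gS. split; first exact hS.
pose Rl (cy : bool * G) (p : G * nat) := S cy.2 ->
   lt p.2 (if cy.1 then m else n) /\ (if cy.1 then P else Q) p.2 p.1 /\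
   cy.2 = p.1 ** (if cy.1 then g else h) p.2.
have ex : forall cy, exists p, Rl cy p.
  move=> [c y]; case: (pselect (S y)) => Sy; last by exists (one, 0%nat).
  case: c.
    by have [i [z [lt1 [Pz e]]]] := proj1 (cP y) Sy; exists (z, i).
  by have [i [z [lt1 [Pz e]]]] := proj1 (cQ y) Sy; exists (z, i).
have [f Hf] := choice ex.
exists (fun c y => (f (c, y)).1), (fun c y => (f (c, y)).2).
split.
  move=> c y Sy; have [lt1 [Pz e]] := Hf (c, y) Sy; split => //.
  by case: c lt1 Pz e => /= lt1 Pz e; [apply: (PS _ _ lt1 Pz) | apply: (QS _ _ lt1 Pz)].
move=> c c' y y' Sy Sy' e.
have [lt1 [Pz ez]] := Hf (c, y) Sy.
have [lt1' [Pz' ez']] := Hf (c', y') Sy'.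
simpl in *.
have ei : (f (c, y)).2 = (f (c', y')).2 /\ c = c'.
  case: c c' e lt1 Pz ez lt1' Pz' ez' => [] [] e lt1 Pz ez lt1' Pz' ez'.
  - split => //; case: (pselect ((f (true, y)).2 = (f (true, y')).2)) => // ne.
    by exfalso; apply: (dP _ _ _ lt1 lt1' ne Pz); rewrite e.
  - by exfalso; apply: (dPQ _ _ _ lt1 lt1' Pz); rewrite e.
  - by exfalso; apply: (dPQ _ _ _ lt1' lt1 Pz'); rewrite -e.
  - split => //; case: (pselect ((f (false, y)).2 = (f (false, y')).2)) => // ne.
    by exfalso; apply: (dQ _ _ _ lt1 lt1' ne Pz); rewrite e.
case: ei => ei ec; split => //.
by rewrite ez ez' e ei ec.
Qed.


Lemma inv1 : inv one = one.
Proof. by rewrite -{2}(mulV one) gmul1l. Qed.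

Lemma normalize m n a b : matching (full G) m n a b ->
  exists a' b' (src : bool -> G -> G) (idx : bool -> G -> nat),
    a' 0 = one /\ b' 0 = one /\
    (forall c y, lt (idx c y) (if c then m else n) /\
                 y = src c y ** (if c then a' else b') (idx c y)) /\
    (forall c c' y y', src c y = src c' y' -> c = c' /\ y = y').
Proof.
move=> [_ [_ [src [idx [H1 H2]]]]].
pose x0 (c : bool) := if c then a 0 else b 0.
exists (fun i => a i ** inv (a 0)), (fun j => b j ** inv (b 0)).
exists (fun c y => src c (y ** x0 c)), (fun c y => idx c (y ** x0 c)).
split; first exact: mulV. split; first exact: mulV.
split.
  move=> c y; have [_ [lt1 e]] := H1 c (y ** x0 c) I; split; first exact lt1.
  clear lt1.
  by case: c e => /= e; rewrite gmulA -e mulKr.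
move=> c c' y y' e; have [ec ey] := H2 c c' _ _ I I e; split => //.
by subst c'; apply: mulrI ey.
Qed.

Section Transfer.
Variables (H : G -> Prop) (d : nat) (r : nat -> G) (kap : G -> nat).
Hypothesis Hsub : is_subgroup G H.
Hypothesis kapP : forall x, lt (kap x) d /\ H (x ** inv (r (kap x))).
Hypothesis kapU : forall x j, lt j d -> H (x ** inv (r j)) -> j = kap x.
Variables (m n : nat) (a b : nat -> G) (src : bool -> G -> G) (idx : bool -> G -> nat).
Hypothesis a0 : a 0 = one.
Hypothesis b0 : b 0 = one.
Hypothesis Hm : lt 0 m.
Hypothesis Hn : lt 0 n.
Hypothesis Hd : lt 0 d.
Hypothesis Hsrc : forall c y, lt (idx c y) (if c then m else n) /\
   y = src c y ** (if c then a else b) (idx c y).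
Hypothesis Hinj : forall c c' y y', src c y = src c' y' -> c = c' /\ y = y'.

Lemma H1 : H one. Proof. by case: Hsub. Qed.
Lemma HM x y : H x -> H y -> H (x ** y). Proof. by case: Hsub => _ [h _]; apply: h. Qed.
Lemma HV x : H x -> H (inv x). Proof. by case: Hsub => _ [_ h]; apply: h. Qed.

Definition al (c : bool) := if c then a else b.
Definition tt (l : nat) (g : G) := r l ** g ** inv (r (kap (r l ** g))).
Definition AA (c : bool) (k : nat) :=
  if k == 0%nat then one else tt ((k.-1) %% d) (al c (1 + (k.-1) %/ d)).
Definition MM (c : bool) := (1 + d * ((if c then m else n) - 1))%nat.

Lemma ttH l g : H (tt l g).
Proof. by rewrite /tt; case: (kapP (r l ** g)). Qed.

Lemma AAH c k : H (AA c k).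
Proof. rewrite /AA; case: eqP => _; [exact: H1 | exact: ttH]. Qed.

Lemma kap_r y l : H y -> lt l d -> kap (y ** r l) = l.
Proof. by move=> Hy ld; apply/esym/kapU => //; rewrite mulKr. Qed.

Definition LL := {classic ({y : G | H y} * bool)}.
Definition RR := {classic G}.
Local Open Scope fset_scope.

Definition Nb (u : LL) : {fset RR} :=
  [fset (sval u.1 ** inv (AA u.2 k) : RR) | k in iota 0 (MM u.2)].

Definition Phi (u : LL) (l : nat) : RR * nat :=
  let x := src u.2 (sval u.1 ** r l) in ((x ** inv (r (kap x)) : RR), kap x).

Lemma Phi_in u l : (l < d)%N -> (Phi u l).1 \in Nb u /\ ((Phi u l).2 < d)%N.
Proof.
move=> ld; case: u => [[y Hy] c]; rewrite /Phi /Nb /=.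
set z := y ** r l; set x := src c z; set i := idx c z; set ll := kap x.
have [il ez] := Hsrc c z; rewrite -/x -/i in il ez.
have [lld Hx] := kapP x; rewrite -/ll in lld Hx.
split; last by apply/ltP.
have kz : kap z = l by apply: kap_r => //; apply/ltP.
apply/imfsetP => /=.
case: (eqVneq i 0%nat) => [i0|i0].
  exists 0%nat; first by rewrite inE eqxx.
  rewrite /AA eqxx inv1 mul1r.
  have exz : x = z by rewrite ez /= i0; case: (c); rewrite /= ?a0 ?b0 mul1r.
  by rewrite /ll exz kz /z mulKr.
exists (1 + ((i.-1) * d + ll))%nat.
  rewrite inE mem_iota; apply/orP; right; case: (c) il => /= il; nia.
rewrite /AA /= add0n.
rewrite modnMDl divnMDl; last by apply/ltP.
rewrite (modn_small (introT ltP lld)) (divn_small (introT ltP lld)) addn0.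
have ei : (1 + i.-1)%nat = i by rewrite add1n prednK // lt0n.
rewrite ei.
rewrite /tt.
set rl := r ll.
have erl : rl = inv (x ** inv rl) ** x by rewrite invM invK mulVKr.
have kk : kap (rl ** al c i) = l.
  apply/esym/kapU; first by apply/ltP.
  rewrite {1}erl -!gmulA (gmulA G x) /al -ez /z mulKr.
  by apply: HM => //; apply: HV.
rewrite kk !invM invK !gmulA -/z.
have -> : z ** inv (al c i) = x by rewrite ez /al mulKr.
by [].
Qed.


Lemma Phi_inj u u' l l' : (l < d)%N -> (l' < d)%N -> Phi u l = Phi u' l' -> u = u' /\ l = l'.
Proof.
move=> ld ld'; case: u => [[y Hy] c]; case: u' => [[y' Hy'] c']; rewrite /Phi /=.
set x := src c (y ** r l); set x' := src c' (y' ** r l').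
case=> e1 e2.
have ex : x = x' by rewrite -(mulVKr x (r (kap x))) e1 e2 mulVKr.
have [ec ez] := Hinj ex.
have kl : kap (y ** r l) = l by apply: kap_r => //; apply/ltP.
have kl' : kap (y' ** r l') = l' by apply: kap_r => //; apply/ltP.
have el : l = l' by rewrite -kl -kl' ez.
subst c' l'.
have ey : y = y' by apply: mulrI ez.
subst y'; split => //.
by rewrite (Prop_irrelevance Hy Hy').
Qed.

Lemma hallN : hall Nb.
Proof.
apply: (@hall_fold _ _ _ d Phi); first by apply/ltP.
  exact: Phi_in.
exact: Phi_inj.
Qed.

Lemma matchH : matching H (MM true) (MM false) (AA true) (AA false).
Proof.
have [f [finj fN]] := hall_inf hallN.
have ex : forall u : LL, exists k, lt k (MM u.2) /\ f u = sval u.1 ** inv (AA u.2 k).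
  move=> u; have := fN u; rewrite /Nb => /imfsetP[k kin ->].
  by exists k; split => //; move: kin; rewrite mem_iota => /andP[_ /ltP]; rewrite add0n.
have [kf Hkf] := choice ex.
pose src' (c : bool) (y : G) : G :=
  match pselect (H y) with left Hy => f (exist _ y Hy, c) | right _ => one end.
pose idx' (c : bool) (y : G) : nat :=
  match pselect (H y) with left Hy => kf (exist _ y Hy, c) | right _ => 0%nat end.
have srcE : forall c y (Hy : H y), src' c y = f (exist _ y Hy, c).
  move=> c y Hy; rewrite /src'; case: pselect => [Hy'|//].
  by rewrite (Prop_irrelevance Hy' Hy).
have idxE : forall c y (Hy : H y), idx' c y = kf (exist _ y Hy, c).
  move=> c y Hy; rewrite /idx'; case: pselect => [Hy'|//].
  by rewrite (Prop_irrelevance Hy' Hy).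
split; first by move=> i _; apply: AAH.
split; first by move=> i _; apply: AAH.
exists src', idx'; split.
  move=> c y Hy; rewrite (srcE c y Hy) (idxE c y Hy).
  have [lk ek] := Hkf (exist _ y Hy, c); rewrite /= in lk ek.
  split; first by rewrite ek; apply: HM => //; apply: HV; apply: AAH.
  split; first by case: (c) lk.
  by case: (c) ek => ->; rewrite mulVKr.
move=> c c' y y' Hy Hy'; rewrite (srcE c y Hy) (srcE c' y' Hy') => /finj [] ey ec.
by split.
Qed.

End Transfer.
End Grp.

Lemma tarski_exists (G : Grp) (S : G -> Prop) : (exists m n, paradoxical G S m n) ->
  exists k, is_tarski_number G S k.
Proof.
move=> [m [n Pmn]].
have exP : exists k, `[< exists m n, paradoxical G S m n /\ m + n = k >].
  by exists (m + n)%nat; apply/asboolP; exists m, n.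
case: (ex_minnP exP) => k /asboolP [m0 [n0 [P0 e0]]] hmin.
exists k; split; first by exists m0, n0.
move=> m1 n1 P1; apply/leP; apply: hmin; apply/asboolP; by exists m1, n1.
Qed.

Theorem theorem1 (G : Grp) (H : G -> Prop) (d : nat) :
  nonamenable G ->
  is_subgroup G H ->
  has_index G H d ->
  exists kG kH : nat,
    is_tarski_number G (full G) kG /\
    is_tarski_number G H kH /\
    (Z.of_nat kH - 2 <= Z.of_nat d * (Z.of_nat kG - 2))%Z.
Proof.
move=> nonam Hsub [r Hr].
have [kG TG] := tarski_exists nonam.
have [[mG [nG [PG eG]]] minG] := TG.
have mG0 := proj1 PG. have nG0 := proj1 (proj2 PG).
have [a [b Mab]] := par_to_match PG.
have [a' [b' [src [idx [a0 [b0 [Hs Hi]]]]]]] := normalize Mab.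
have [kap Hkap] := choice Hr.
have kapP : forall x, lt (kap x) d /\ H (gmul G x (ginv G (r (kap x)))).
  by move=> x; have [? [? _]] := Hkap x.
have kapU : forall x j, lt j d -> H (gmul G x (ginv G (r j))) -> j = kap x.
  by move=> x j jd Hj; have [_ [_ U]] := Hkap x; apply: U.
have d0 : lt 0 d by have [h _] := kapP (gone G); lia.
have MH := matchH Hsub kapP kapU a0 b0 mG0 nG0 d0 Hs Hi.
have m1 : lt 0 (MM d mG nG true) by rewrite /MM; apply/ltP; rewrite add1n.
have n1 : lt 0 (MM d mG nG false) by rewrite /MM; apply/ltP; rewrite add1n.
have PH := match_to_par m1 n1 MH.
have [kH TH] := tarski_exists (ex_intro _ _ (ex_intro _ _ PH)).
exists kG, kH; split => //; split => //.
have := proj2 TH _ _ PH; rewrite /MM /= => le1.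
subst kG.
clear -mG0 nG0 le1.
case: mG mG0 le1 => [|p] mG0 le1; first lia.
case: nG nG0 le1 => [|q] nG0 le1; first lia.
rewrite !subn1 /= add0n in le1.
move: le1; rewrite -!plusE -!multE => le1.
nia.
Qed.
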